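(* For every $\xi\in\Xi$, the hybrid system $\mathcal H_\xi$ renders $\mathcal A_s$ strongly forward invariant for the sub-state $\tau$, and $\mathcal A:=\mathcal A_s\times\mathbb Z_{\ge0}$ strongly forward invariant for the state $x$: every complete solution $x=(\tau,\lambda)$ of $\mathcal H_\xi$ with $\tau(0,0)\in\mathcal A_s$ satisfies $\tau(t,k)\in\mathcal A_s$ (equivalently $x(t,k)\in\mathcal A$) for all $(t,k)\in\operatorname{dom}(x)$.
   Context: $\mathcal G=(\mathcal V,\mathcal E)$ is a simple digraph on $\mathcal V=\{1,\dots,N\}$; $(i,j)\in\mathcal E$ means $j$ is an out-neighbor of $i$; $\mathcal E_i^-$ is the set of out-edges of $i$. Fix $T>0$, $r\in(0,1)^N$. A subgraph $(\mathcal V,\mathcal E')$, $\mathcal E'\subseteq\mathcal E$, is feasible if for every $i$ either $\mathcal E_i^-\subseteq\mathcal E'$ or $\mathcal E_i^-\cap\mathcal E'=\varnothing$. $\Xi$ is the set of infinite sequences $\xi=\phi_1\phi_2\cdots$ of feasible subgraphs, $\phi_\lambda=(\mathcal V,\mathcal E_\lambda)$. Hybrid system $\mathcal H_\xi$: state $x=(\tau,\lambda)\in\mathbb R^N_{\ge0}\times\mathbb Z_{\ge0}$; flow set $C=[0,1]^N\times\mathbb Z_{\ge0}$ with $\dot\tau=\frac1T\mathbf 1_N$, $\dot\lambda=0$; jump set $D=\{\tau\in[0,1]^N:\max_i\tau_i=1\}\times\mathbb Z_{\ge0}$ with $x^+\in G_{\lambda+1}(\tau)\times\{\lambda+1\}$,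 where $G_\lambda$ is the outer-semicontinuous hull of $G_\lambda^0(\tau)=\{g\in\mathbb R^N:g_i=0,\ g_j\in\mathcal R_{j,\lambda}(\tau)\ \forall j\ne i\}$, $i$ an agent with $\tau_i=1$, and $\mathcal R_{j,\lambda}(\tau)=\{0\}$, $\{0,1\}$, $\{1\}$ if $(i,j)\in\mathcal E_\lambda$ and $\tau_j<r_j$, $=r_j$, $>r_j$ respectively, and $\{\tau_j\}$ if $(i,j)\notin\mathcal E_\lambda$. Solutions are hybrid arcs on hybrid time domains that flow in $C$ according to the flow map and jump from $D$ via the jump map; complete means the domain is unbounded. $\mathcal A_s:=\{\mu\mathbf 1_N:\mu\in[0,1]\}\cup\{0,1\}^N$. *)

(* Defs.v *)
From Stdlib Require Import Reals Lra Lia.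
Open Scope R_scope.

(* Agents are indexed 0..N-1 (paper: 1..N).  Vectors in R^N are functions
   nat -> R of which only the coordinates i < N are meaningful. *)
Definition vec := nat -> R.

(* Simple digraph on {0,..,N-1}: edge (i,j) means j is an out-neighbour of i. *)
Definition simple_digraph (N : nat) (E : nat -> nat -> Prop) : Prop :=
  forall i j, E i j -> (i < N)%nat /\ (j < N)%nat /\ i <> j.

Definition feasible (E E' : nat -> nat -> Prop) : Prop :=
  (forall i j, E' i j -> E i j) /\
  (forall i, (forall j, E i j -> E' i j) \/ (forall j, ~ E' i j)).

Definition in_As (N : nat) (tau : vec) : Prop :=
  (exists mu, 0 <= mu <= 1 /\ forall i, (i < N)%nat -> tau i = mu) \/
  (forall i, (i < N)%nat -> tau i = 0 \/ tau i = 1).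

(* tau-part of the flow set C = [0,1]^N x Z>=0 (which is closed) *)
Definition inC (N : nat) (tau : vec) : Prop :=
  forall i, (i < N)%nat -> 0 <= tau i <= 1.

(* tau-part of the jump set D = {tau in [0,1]^N : max_i tau_i = 1} x Z>=0 *)
Definition inD (N : nat) (tau : vec) : Prop :=
  inC N tau /\ exists i, (i < N)%nat /\ tau i = 1.

(* g_j ∈ R_{j,lambda}(tau), for the firing agent i and edge set E_lambda *)
Definition Rset (El : nat -> nat -> Prop) (r : vec) (i j : nat) (tau : vec) (g : R) : Prop :=
  (El i j /\ ((tau j < r j /\ g = 0) \/ (tau j = r j /\ (g = 0 \/ g = 1)) \/
              (r j < tau j /\ g = 1)))
  \/ (~ El i j /\ g = tau j).

Definition G0 (N : nat) (El : nat -> nat -> Prop) (r : vec) (tau g : vec) : Prop :=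
  inD N tau /\
  exists i, (i < N)%nat /\ tau i = 1 /\ g i = 0 /\
    forall j, (j < N)%nat -> j <> i -> Rset El r i j tau (g j).

(* G_lambda: outer-semicontinuous hull of G^0_lambda, i.e. the set-valued map
   whose graph is the closure (in R^N x R^N) of the graph of G^0_lambda. *)
Definition Ghull (N : nat) (El : nat -> nat -> Prop) (r : vec) (tau g : vec) : Prop :=
  exists (ts gs : nat -> vec),
    (forall n, G0 N El r (ts n) (gs n)) /\
    forall j, (j < N)%nat ->
      Un_cv (fun n => ts n j) (tau j) /\ Un_cv (fun n => gs n j) (g j).

(* Hybrid time domains: subsets E of R>=0 x N such that every truncation
   E ∩ ([0,T] x {0..J}), (T,J) ∈ E, is a compact hybrid time domain
   ∪_{j=0}^{J} [t_j, t_{j+1}] x {j} with 0 = t_0 <= t_1 <= ... <= t_{J+1} = T. *)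
Definition hybrid_time_domain (E : R -> nat -> Prop) : Prop :=
  (forall t j, E t j -> 0 <= t) /\
  forall T J, E T J ->
    exists tt : nat -> R,
      tt 0%nat = 0 /\ (forall k, (k <= J)%nat -> tt k <= tt (S k)) /\ tt (S J) = T /\
      forall t j, (E t j /\ t <= T /\ (j <= J)%nat) <-> ((j <= J)%nat /\ tt j <= t <= tt (S j)).

Definition null_set (S : R -> Prop) : Prop :=
  forall eps, 0 < eps ->
    exists a b : nat -> R,
      (forall n, a n <= b n) /\
      (forall x, S x -> exists n, a n < x < b n) /\
      (forall m, sum_f_R0 (fun n => b n - a n) m <= eps).

Definition ae_on (I P : R -> Prop) : Prop := null_set (fun t => I t /\ ~ P t).

Definition interior (I : R -> Prop) (t : R) : Prop :=
  exists e, 0 < e /\ forall s, t - e < s < t + e -> I s.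

Definition abs_cont_on (f : R -> R) (a b : R) : Prop :=
  forall eps, 0 < eps -> exists delta, 0 < delta /\
    forall (n : nat) (u v : nat -> R),
      (forall k, (k <= n)%nat -> a <= u k /\ u k <= v k /\ v k <= b) ->
      (forall k l, (k < l)%nat -> (l <= n)%nat -> v k <= u l) ->
      sum_f_R0 (fun k => v k - u k) n < delta ->
      sum_f_R0 (fun k => Rabs (f (v k) - f (u k))) n < eps.

Definition loc_abs_cont_on (f : R -> R) (I : R -> Prop) : Prop :=
  forall a b, a <= b -> (forall t, a <= t <= b -> I t) -> abs_cont_on f a b.

Definition hybrid_arc (N : nat) (dom : R -> nat -> Prop)
    (tau : R -> nat -> vec) (lam : R -> nat -> nat) : Prop :=
  hybrid_time_domain dom /\
  forall j,
    (forall i, (i < N)%nat -> loc_abs_cont_on (fun s => tau s j i) (fun s => dom s j)) /\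
    loc_abs_cont_on (fun s => INR (lam s j)) (fun s => dom s j).

(* Solutions of H_xi (Goebel–Sanfelice–Teel): xi k is the k-th feasible
   subgraph phi_k (k >= 1), given by its edge relation. *)
Definition is_solution (N : nat) (T : R) (r : vec) (xi : nat -> nat -> nat -> Prop)
    (dom : R -> nat -> Prop) (tau : R -> nat -> vec) (lam : R -> nat -> nat) : Prop :=
  hybrid_arc N dom tau lam /\
  (dom 0 0%nat -> inC N (tau 0 0%nat) \/ inD N (tau 0 0%nat)) /\
  (forall j, (exists a b, a < b /\ forall t, a < t < b -> dom t j) ->
     (forall t, interior (fun s => dom s j) t -> inC N (tau t j)) /\
     ae_on (fun s => dom s j)
       (fun t => interior (fun s => dom s j) t /\
          (forall i, (i < N)%nat -> derivable_pt_lim (fun s => tau s j i) t (1 / T)) /\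
          derivable_pt_lim (fun s => INR (lam s j)) t 0)) /\
  (forall t j, dom t j -> dom t (S j) ->
     inD N (tau t j) /\
     Ghull N (xi (S (lam t j))) r (tau t j) (tau t (S j)) /\
     lam t (S j) = S (lam t j)).

Definition complete (dom : R -> nat -> Prop) : Prop :=
  forall M, exists t j, dom t j /\ M <= t + INR j.

(* Main.v *)
Require Import Defs.
From Stdlib Require Import Reals Lra Lia Classical.
Open Scope R_scope.

Ltac rmm := repeat (unfold Rmax, Rmin; match goal with
  | |- context [Rle_dec ?a ?b] => destruct (Rle_dec a b)
  | H : context [Rle_dec ?a ?b] |- _ => destruct (Rle_dec a b)
  end).

Ltac absr := repeat match goal with
  | H : context [Rabs ?x] |- _ =>
      let h := fresh in destruct (Rcase_abs x) as [h|h];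
      [rewrite (Rabs_left x h) in H|rewrite (Rabs_right x h) in H]
  | |- context [Rabs ?x] =>
      let h := fresh in destruct (Rcase_abs x) as [h|h];
      [rewrite (Rabs_left x h)|rewrite (Rabs_right x h)]
  end.

Lemma real_ind (a b : R) (P : R -> Prop) :
  a <= b -> P a ->
  (forall x, a <= x <= b -> exists d, 0 < d /\
     forall y z, x - d < y <= x -> x <= z < x + d -> a <= y -> z <= b -> P y -> P z) ->
  P b.
Proof.
  intros Hab Pa Hstep.
  set (E := fun x => a <= x <= b /\ P x).
  assert (Hb : bound E) by (exists b; intros x [Hx _]; lra).
  assert (He : exists x, E x) by (exists a; split; [lra|exact Pa]).
  destruct (completeness E Hb He) as [s [Hub Hl]].
  assert (Has : a <= s) by (apply Hub; split; [lra|exact Pa]).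
  assert (Hsb : s <= b) by (apply Hl; intros x [Hx _]; lra).
  destruct (Hstep s (conj Has Hsb)) as [d [Hd Hs]].
  assert (Hex : exists x, E x /\ s - d < x).
  { apply NNPP; intro Hn.
    assert (s <= s - d); [|lra].
    apply Hl; intros x Ex.
    destruct (Rle_or_lt x (s - d)) as [?|Hlt]; [assumption|].
    exfalso; apply Hn; exists x; split; assumption. }
  destruct Hex as [x [[Hx Px] Hxs]].
  assert (Hxs' : x <= s) by (apply Hub; split; assumption).
  assert (Ps : P s) by (apply (Hs x s); try lra; assumption).
  destruct (Rle_or_lt b s) as [Hbs|Hsb'].
  - replace b with s by lra; exact Ps.
  - exfalso.
    assert (Hz : exists z, s < z /\ z <= b /\ z < s + d).
    { exists (Rmin (s + d/2) b); rmm; lra. }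
    destruct Hz as [z [Hz1 [Hz2 Hz3]]].
    assert (Pz : P z) by (apply (Hs s z); try lra; assumption).
    assert (z <= s) by (apply Hub; split; [lra|exact Pz]).
    lra.
Qed.

Definition ell (a : R) (an bn : nat -> R) (k : nat) (x : R) : R :=
  Rmax 0 (Rmin x (bn k) - Rmax a (an k)).
Definition Phi a an bn M x := sum_f_R0 (fun k => ell a an bn k x) M.

Lemma ell_nonneg a an bn k x : 0 <= ell a an bn k x.
Proof. unfold ell; rmm; lra. Qed.
Lemma ell_mono a an bn k x y : x <= y -> ell a an bn k x <= ell a an bn k y.
Proof. intros; unfold ell; rmm; lra. Qed.
Lemma ell_le a an bn k x : an k <= bn k -> ell a an bn k x <= bn k - an k.
Proof. intros; unfold ell; rmm; lra. Qed.
Lemma ell_incr a an bn k y z : a <= y -> an k < y -> y <= z -> z < bn k ->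
  z - y <= ell a an bn k z - ell a an bn k y.
Proof. intros; unfold ell; rmm; lra. Qed.

Lemma sum_nonneg (g : nat -> R) M : (forall i, 0 <= g i) -> 0 <= sum_f_R0 g M.
Proof. intros H; induction M; simpl; [apply H|]. specialize (H (S M)); lra. Qed.

Lemma sum_ge_term (g : nat -> R) M k : (forall i, 0 <= g i) -> (k <= M)%nat -> g k <= sum_f_R0 g M.
Proof.
  intros H Hk; induction M; simpl.
  - replace k with 0%nat by lia; lra.
  - destruct (Nat.eq_dec k (S M)) as [->|Hne].
    + pose proof (sum_nonneg g M H); lra.
    + specialize (IHM ltac:(lia)). specialize (H (S M)); lra.
Qed.

Lemma sum_le_M (g : nat -> R) M M' : (forall i, 0 <= g i) -> (M <= M')%nat ->
  sum_f_R0 g M <= sum_f_R0 g M'.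
Proof.
  intros H Hk; induction Hk; [lra|]. simpl. specialize (H (S m)); lra.
Qed.

Lemma sum_minus (g h : nat -> R) M : sum_f_R0 (fun k => g k - h k) M = sum_f_R0 g M - sum_f_R0 h M.
Proof. induction M; simpl; [ring|rewrite IHM; ring]. Qed.

Lemma sum_lin (g h : nat -> R) r M : sum_f_R0 (fun k => g k + r * h k) M = sum_f_R0 g M + r * sum_f_R0 h M.
Proof. induction M; simpl; [ring|rewrite IHM; ring]. Qed.

Lemma abs3 p q s : Rabs (p + q - s) <= Rabs p + Rabs q + Rabs s.
Proof.
  unfold Rminus. eapply Rle_trans; [apply Rabs_triang|].
  rewrite Rabs_Ropp. pose proof (Rabs_triang p q); lra.
Qed.

Lemma deriv_bound (f : R -> R) x c eps (dl : R) :
  (forall h, h <> 0 -> Rabs h < dl -> Rabs ((f (x + h) - f x) / h - c) < eps) ->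
  forall w, Rabs (w - x) < dl -> Rabs (f w - f x - c * (w - x)) <= eps * Rabs (w - x).
Proof.
  intros Hd w Hw.
  destruct (Req_dec w x) as [->|Hne].
  - replace (f x - f x - c * (x - x)) with 0 by ring. replace (x - x) with 0 by ring.
    rewrite Rabs_R0; lra.
  - assert (Hh : w - x <> 0) by lra.
    specialize (Hd (w - x) Hh Hw). replace (x + (w - x)) with w in Hd by ring.
    replace (f w - f x - c * (w - x)) with (((f w - f x) / (w - x) - c) * (w - x)) by (field; exact Hh).
    rewrite Rabs_mult. apply Rmult_le_compat_r; [apply Rabs_pos|lra].
Qed.

Lemma ftc_ac (f : R -> R) (a b c : R) :
  a <= b -> abs_cont_on f a b ->
  null_set (fun x => a <= x <= b /\ ~ derivable_pt_lim f x c) ->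
  f b - f a = c * (b - a).
Proof.
  intros Hab Hac Hnull.
  assert (Hmain : forall eps, 0 < eps -> Rabs (f b - f a - c * (b - a)) <= eps * (b - a) + 2 * eps).
  { intros eps Heps.
    destruct (Hac eps Heps) as [delta [Hdelta Hacd]].
    assert (Hc1 : 0 < Rabs c + 1) by (pose proof (Rabs_pos c); lra).
    assert (He2 : 0 < eps / (Rabs c + 1)) by (apply Rdiv_lt_0_compat; lra).
    set (eta := Rmin (delta / 2) (eps / (Rabs c + 1))).
    assert (Heta : 0 < eta) by (unfold eta; rmm; lra).
    assert (Heta1 : eta <= delta / 2) by (unfold eta; rmm; lra).
    assert (Heta2 : eta * (Rabs c + 1) <= eps).
    { assert (eta <= eps / (Rabs c + 1)) by (unfold eta; rmm; lra).
      apply Rle_trans with (eps / (Rabs c + 1) * (Rabs c + 1));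
        [apply Rmult_le_compat_r; lra | right; field; lra]. }
    destruct (Hnull eta Heta) as [an [bn [Hanb [Hcov Hsum]]]].
    set (P := fun x => a <= x <= b /\ exists n (u v : nat -> R) M,
       (forall k, (k <= n)%nat -> a <= u k /\ u k <= v k /\ v k <= x) /\
       (forall k l, (k < l)%nat -> (l <= n)%nat -> v k <= u l) /\
       sum_f_R0 (fun k => v k - u k) n <= Phi a an bn M x /\
       Rabs (f x - f a - c * (x - a)) <= eps * (x - a) +
         sum_f_R0 (fun k => Rabs (f (v k) - f (u k)) + Rabs c * (v k - u k)) n).
    assert (Pb : P b).
    { apply (real_ind a b P); [lra| |].
      - split; [lra|]. exists 0%nat, (fun _ => a), (fun _ => a), 0%nat.
        split; [intros; lra|]. split; [intros; lia|]. split.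
        + unfold Phi; simpl. pose proof (ell_nonneg a an bn 0 a); lra.
        + simpl. replace (f a - f a - c * (a - a)) with 0 by ring.
          replace (f a - f a) with 0 by ring. replace (a - a) with 0 by ring.
          rewrite Rabs_R0; lra.
      - intros x Hx. destruct (classic (derivable_pt_lim f x c)) as [Hd|Hnd].
        + destruct (Hd eps Heps) as [dl Hdl].
          exists dl; split; [apply cond_pos|].
          intros y z Hy Hz Hay Hzb [Hy' [n [u [v [M [Hu [Huv [Hlen Hbnd]]]]]]]].
          split; [lra|]. exists n, u, v, M.
          split; [intros k Hk; destruct (Hu k Hk); lra|]. split; [exact Huv|]. split.
          * eapply Rle_trans; [exact Hlen|]. unfold Phi; apply sum_Rle; intros; apply ell_mono; lra.
          * pose proof (deriv_bound f x c eps dl Hdl z ltac:(rewrite Rabs_right; lra)) as Bz.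
            pose proof (deriv_bound f x c eps dl Hdl y ltac:(rewrite Rabs_left1; lra)) as By.
            rewrite (Rabs_right (z - x)) in Bz by lra. rewrite (Rabs_left1 (y - x)) in By by lra.
            replace (f z - f a - c * (z - a)) with
              ((f y - f a - c * (y - a)) + (f z - f x - c * (z - x)) - (f y - f x - c * (y - x))) by ring.
            eapply Rle_trans; [apply abs3|]. lra.
        + destruct (Hcov x (conj Hx Hnd)) as [k0 Hk0].
          exists (Rmin (x - an k0) (bn k0 - x)). split; [rmm; lra|].
          intros y z Hy Hz Hay Hzb [Hy' [n [u [v [M [Hu [Huv [Hlen Hbnd]]]]]]]].
          assert (Hy2 : an k0 < y) by (revert Hy; rmm; lra).
          assert (Hz2 : z < bn k0) by (revert Hz; rmm; lra).
          split; [lra|].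
          exists (S n), (fun k => if Compare_dec.le_dec k n then u k else y),
                 (fun k => if Compare_dec.le_dec k n then v k else z), (Nat.max M k0).
          split; [|split; [|split]].
          * intros k Hk. destruct (Compare_dec.le_dec k n) as [Hkn|Hkn].
            -- destruct (Hu k Hkn); lra.
            -- lra.
          * intros k l Hkl Hl. destruct (Compare_dec.le_dec l n) as [Hln|Hln].
            -- destruct (Compare_dec.le_dec k n); [apply Huv; lia|lia].
            -- destruct (Compare_dec.le_dec k n) as [Hkn|]; [|lia]. destruct (Hu k Hkn); lra.
          * rewrite tech5. destruct (Compare_dec.le_dec (S n) n); [lia|].
            rewrite (sum_eq _ (fun k => v k - u k)) by (intros i Hi; destruct (Compare_dec.le_dec i n); [reflexivity|lia]).
            assert (H1 : Phi a an bn M y <= Phi a an bn (Nat.max M k0) y)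
              by (apply sum_le_M; [intros; apply ell_nonneg|lia]).
            assert (H2 : ell a an bn k0 z - ell a an bn k0 y <=
                         Phi a an bn (Nat.max M k0) z - Phi a an bn (Nat.max M k0) y).
            { unfold Phi; rewrite <- sum_minus.
              apply (sum_ge_term (fun k => ell a an bn k z - ell a an bn k y)); [|lia].
              intros i; pose proof (ell_mono a an bn i y z ltac:(lra)); lra. }
            pose proof (ell_incr a an bn k0 y z Hay Hy2 ltac:(lra) Hz2). lra.
          * rewrite tech5. destruct (Compare_dec.le_dec (S n) n); [lia|].
            rewrite (sum_eq _ (fun k => Rabs (f (v k) - f (u k)) + Rabs c * (v k - u k)))
              by (intros i Hi; destruct (Compare_dec.le_dec i n); [reflexivity|lia]).
            replace (f z - f a - c * (z - a)) with
              ((f y - f a - c * (y - a)) + (f z - f y) - (c * (z - y))) by ring.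
            eapply Rle_trans; [apply abs3|]. rewrite Rabs_mult, (Rabs_right (z - y)) by lra.
            assert (0 <= eps * (z - y)) by (apply Rmult_le_pos; lra). lra. }
    destruct Pb as [_ [n [u [v [M [Hu [Huv [Hlen Hbnd]]]]]]]].
    assert (HPhi : Phi a an bn M b <= eta).
    { eapply Rle_trans; [|apply (Hsum M)]. unfold Phi; apply sum_Rle; intros; apply ell_le; apply Hanb. }
    assert (HL : sum_f_R0 (fun k => v k - u k) n < delta) by lra.
    specialize (Hacd n u v Hu Huv HL).
    rewrite sum_lin in Hbnd.
    assert (Rabs c * sum_f_R0 (fun k => v k - u k) n <= Rabs c * eta)
      by (apply Rmult_le_compat_l; [apply Rabs_pos|lra]).
    assert (eta * (Rabs c + 1) = Rabs c * eta + eta) by ring.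
    lra. }
  set (D := f b - f a - c * (b - a)) in *.
  assert (HD : Rabs D = 0).
  { apply NNPP; intro Hne. pose proof (Rabs_pos D).
    set (e := Rabs D / (2 * (b - a + 2))).
    assert (He : 0 < e) by (unfold e; apply Rdiv_lt_0_compat; lra).
    assert (e * (b - a + 2) = Rabs D / 2) by (unfold e; field; lra).
    specialize (Hmain e He). lra. }
  destruct (Req_dec D 0) as [H|H]; [unfold D in H; lra|].
  pose proof (Rabs_pos_lt D H); lra.
Qed.

Lemma null_subset (S1 S2 : R -> Prop) : (forall x, S1 x -> S2 x) -> null_set S2 -> null_set S1.
Proof.
  intros Hs Hn eps He. destruct (Hn eps He) as [a [b [H1 [H2 H3]]]].
  exists a, b; split; [exact H1|split; [|exact H3]]. intros x Hx; apply H2, Hs, Hx.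
Qed.

Lemma flow_lin N T r xi dom tau lam j s0 t :
  is_solution N T r xi dom tau lam -> s0 < t -> (forall s, s0 <= s <= t -> dom s j) ->
  (forall x, s0 < x < t -> inC N (tau x j)) /\
  (forall i x, (i < N)%nat -> s0 <= x <= t -> tau x j i - tau s0 j i = 1 / T * (x - s0)).
Proof.
  intros [[Hhtd Hac] [_ [Hflow _]]] Hlt Hdom.
  destruct (Hflow j) as [HinC Hae].
  { exists s0, t; split; [exact Hlt|]. intros; apply Hdom; lra. }
  split.
  - intros x Hx. apply HinC. exists (Rmin (x - s0) (t - x)). split; [rmm; lra|].
    intros s Hs. apply Hdom. revert Hs; rmm; lra.
  - intros i x Hi Hx.
    apply (ftc_ac (fun s => tau s j i) s0 x (1 / T)); [lra| |].
    + destruct (Hac j) as [Hi' _]. apply (Hi' i Hi s0 x); [lra|]. intros; apply Hdom; lra.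
    + unfold ae_on in Hae. eapply null_subset; [|exact Hae].
      intros y [Hy Hnd]. split; [apply Hdom; lra|].
      intros [_ [Hd _]]. apply Hnd, Hd, Hi.
Qed.

Lemma flow_As N T r xi dom tau lam j s0 t :
  is_solution N T r xi dom tau lam -> 0 < T -> s0 <= t -> (forall s, s0 <= s <= t -> dom s j) ->
  in_As N (tau s0 j) -> in_As N (tau t j).
Proof.
  intros Hsol HT Hle Hdom H0.
  destruct (Req_dec s0 t) as [<-|Hne]; [exact H0|].
  assert (Hlt : s0 < t) by lra.
  destruct (flow_lin N T r xi dom tau lam j s0 t Hsol Hlt Hdom) as [HC Hlin].
  destruct (Nat.eq_dec N 0) as [HN|HN].
  { right; intros; lia. }
  assert (Hk : 0 < 1 / T) by (apply Rdiv_lt_0_compat; lra).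
  set (k := 1 / T) in *.
  assert (Hdiag : forall mu, 0 <= mu <= 1 -> (forall i, (i < N)%nat -> tau s0 j i = mu) ->
            in_As N (tau t j)).
  { intros mu Hmu Hi. left. exists (mu + k * (t - s0)).
    assert (Hv : forall x i, (i < N)%nat -> s0 <= x <= t -> tau x j i = mu + k * (x - s0)).
    { intros x i Hi' Hx. pose proof (Hlin i x Hi' Hx). rewrite Hi in H by exact Hi'. lra. }
    split; [split|].
    - assert (0 <= k * (t - s0)) by (apply Rmult_le_pos; lra). lra.
    - apply NNPP; intro Hn.
      set (g := mu + k * (t - s0) - 1).
      assert (Hg : 0 < g) by (unfold g; lra).
      assert (Hg2 : 0 < g / (2 * k)) by (apply Rdiv_lt_0_compat; lra).
      set (th := Rmin ((t - s0) / 2) (g / (2 * k))).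
      assert (Hth : 0 < th /\ th < t - s0) by (unfold th; rmm; lra).
      assert (Hkth : k * th <= g / 2).
      { apply Rle_trans with (k * (g / (2 * k))).
        - apply Rmult_le_compat_l; [lra|unfold th; rmm; lra].
        - right; field; lra. }
      destruct (HC (t - th) ltac:(lra) 0%nat ltac:(lia)) as [_ Hc].
      rewrite (Hv (t - th) 0%nat ltac:(lia) ltac:(lra)) in Hc.
      unfold g in *. lra.
    - intros i Hi'. apply Hv; [exact Hi'|lra]. }
  destruct H0 as [[mu [Hmu Hi]]|H01].
  - exact (Hdiag mu Hmu Hi).
  - destruct (classic (exists i, (i < N)%nat /\ tau s0 j i = 1)) as [[i [Hi Hi1]]|Hno].
    + exfalso. set (x := (s0 + t) / 2).
      destruct (HC x ltac:(unfold x; lra) i Hi) as [_ Hc].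
      pose proof (Hlin i x Hi ltac:(unfold x; lra)).
      assert (0 < k * (x - s0)) by (apply Rmult_lt_0_compat; unfold x; lra).
      lra.
    + apply (Hdiag 0); [lra|]. intros i Hi.
      destruct (H01 i Hi) as [H|H]; [exact H|]. exfalso; apply Hno; exists i; auto.
Qed.

Lemma jump01 N El r tau g : Ghull N El r tau g -> (forall i, (i < N)%nat -> tau i = 0 \/ tau i = 1) ->
  forall i, (i < N)%nat -> g i = 0 \/ g i = 1.
Proof.
  intros [ts [gs [HG Hcv]]] H01 j Hj.
  destruct (Hcv j Hj) as [Hts Hgs].
  assert (Hc : forall n, gs n j = 0 \/ gs n j = 1 \/ gs n j = ts n j).
  { intros n. destruct (HG n) as [_ [i [Hi [_ [Hgi Hr]]]]].
    destruct (Nat.eq_dec j i) as [->|Hne]; [left; exact Hgi|].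
    destruct (Hr j Hj Hne) as [[_ [[_ H]|[[_ [H|H]]|[_ H]]]]|[_ H]]; auto. }
  apply NNPP; intro Hn.
  assert (Hg0 : g j <> 0) by tauto. assert (Hg1 : g j - 1 <> 0) by (intro; apply Hn; right; lra).
  pose proof (Rabs_pos_lt _ Hg0). pose proof (Rabs_pos_lt _ Hg1).
  set (d := Rmin (Rabs (g j)) (Rabs (g j - 1)) / 3).
  assert (Hd : d > 0) by (unfold d; rmm; lra).
  assert (Hd1 : 3 * d <= Rabs (g j)) by (unfold d; rmm; lra).
  assert (Hd2 : 3 * d <= Rabs (g j - 1)) by (unfold d; rmm; lra).
  destruct (Hgs d Hd) as [N1 H1]. destruct (Hts d Hd) as [N2 H2].
  specialize (H1 (Nat.max N1 N2) ltac:(lia)). specialize (H2 (Nat.max N1 N2) ltac:(lia)).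
  unfold R_dist in H1, H2.
  destruct (H01 j Hj) as [Ht|Ht]; rewrite Ht in H2;
  destruct (Hc (Nat.max N1 N2)) as [E|[E|E]]; rewrite E in H1; clear -H1 H2 Hd Hd1 Hd2;
  absr; lra.
Qed.

Theorem lemma2 (N : nat) (E : nat -> nat -> Prop) (T : R) (r : nat -> R)
    (xi : nat -> nat -> nat -> Prop) :
  simple_digraph N E ->
  0 < T ->
  (forall j, (j < N)%nat -> 0 < r j < 1) ->
  (forall k, (1 <= k)%nat -> feasible E (xi k)) ->
  forall (dom : R -> nat -> Prop) (tau : R -> nat -> vec) (lam : R -> nat -> nat),
    is_solution N T r xi dom tau lam ->
    complete dom ->
    in_As N (tau 0 0%nat) ->
    forall t j, dom t j -> in_As N (tau t j).
Proof.
  intros HE HT Hr Hxi dom tau lam Hsol Hcomp H0 t j Hdom.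
  assert (Hhtd := proj1 (proj1 Hsol)).
  revert t Hdom. induction j as [|j IH]; intros t Hdom.
  - destruct (proj2 Hhtd t 0%nat Hdom) as [tt [Ht0 [Hmono [HtS Hchar]]]].
    apply (flow_As N T r xi dom tau lam 0%nat 0 t Hsol HT); [exact (proj1 Hhtd t 0%nat Hdom)| |exact H0].
    intros s Hs. apply (proj2 (Hchar s 0%nat)). split; [lia|]. rewrite Ht0, HtS; exact Hs.
  - destruct (proj2 Hhtd t (S j) Hdom) as [tt [Ht0 [Hmono [HtS Hchar]]]].
    set (s0 := tt (S j)).
    assert (Hs0t : s0 <= t) by (rewrite <- HtS; apply Hmono; lia).
    assert (Hdoms : forall s, s0 <= s <= t -> dom s (S j)).
    { intros s Hs. apply (proj2 (Hchar s (S j))). split; [lia|]. rewrite HtS; exact Hs. }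
    assert (Hpre : dom s0 j).
    { apply (proj2 (Hchar s0 j)). split; [lia|]. split; [apply Hmono; lia|unfold s0; lra]. }
    assert (Hpost : dom s0 (S j)) by (apply Hdoms; lra).
    destruct Hsol as [Harc [HS0 [HS1 Hjump]]].
    destruct (Hjump s0 j Hpre Hpost) as [HD [HG _]].
    assert (Hpre01 : forall i, (i < N)%nat -> tau s0 j i = 0 \/ tau s0 j i = 1).
    { destruct (IH s0 Hpre) as [[mu [Hmu Hi]]|H01]; [|exact H01].
      destruct HD as [_ [i0 [Hi0 Hv]]]. rewrite Hi in Hv by exact Hi0.
      intros i Hi'. right. rewrite Hi by exact Hi'. exact Hv. }
    apply (flow_As N T r xi dom tau lam (S j) s0 t (conj Harc (conj HS0 (conj HS1 Hjump))) HT Hs0t Hdoms).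
    right. exact (jump01 _ _ _ _ _ HG Hpre01).
Qed.
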